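(* Let $n\geq 3$ and $\ell\geq 2$, and consider the generalized $n$-cycle scenario whose measurements each have outcome set $O$ with $|O|=\ell$. A nondisturbing behavior for it is logically contextual if and only if there exist an index $\mu\in\{1,\dots,n\}$, a pair $(a,b)\in O^2$ with $\bar p_\mu(a,b)=1$, and, for each $\nu=1,\dots,n-2$, an enumeration $(\alpha_\nu^1,\dots,\alpha_\nu^\ell)$ of $O$ with pairwise distinct entries and an integer $0\leq m_\nu\leq\ell$, such that all of the following equal $0$: $\bar p_{\mu+1}(b,\alpha_1^i)$ for $1\le i\le m_1$; $\bar p_{\mu+\nu+1}(\alpha_\nu^i,\alpha_{\nu+1}^j)$ for $1\le\nu\le n-3$, $m_\nu< i\le\ell$, $1\le j\le m_{\nu+1}$; $\bar p_{\mu+n-1}(\alpha_{n-2}^i,a)$ for $m_{n-2}<i\le\ell$. (Indices of $\bar p$ are taken modulo $n$.)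
   Context: The generalized $n$-cycle scenario has measurements $M_1,\dots,M_n$, each with finite outcome set $O$, and contexts $\{M_i,M_{i+1}\}$, indices mod $n$. A behavior is a family of probability distributions $p_i$ on $O^2$, $p_i(x,y)$ being the probability that $M_i=x$ and $M_{i+1}=y$; it is nondisturbing if for all $i$ and $x$, $\sum_y p_i(y,x)=\sum_y p_{i+1}(x,y)$. Set $\bar p_i(x,y)=1$ if $p_i(x,y)>0$ and $0$ otherwise. The behavior is logically noncontextual if there exists $\bar p:O^n\to\{0,1\}$ with $\max\{\bar p(t):t_i=x,\ t_{i+1}=y\}=\bar p_i(x,y)$ for all $i,x,y$; otherwise logically contextual. *)

(* Defs.v *)
From HB Require Import structures.
From mathcomp Require Import all_boot all_order all_algebra.
Set Implicit Arguments. Unset Strict Implicit. Unset Printing Implicit Defensive.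
Import Order.TTheory GRing.Theory Num.Theory.
Local Open Scope ring_scope.

(* Generalized n-cycle scenario: measurements indexed by 'Z_n (n >= 3, so
   'Z_n has exactly n elements), contexts {M_i, M_(i+1)}; a behavior is
   p : 'Z_n -> O -> O -> R, p i x y = Prob(M_i = x, M_(i+1) = y). *)

Definition is_behavior (n : nat) (O : finType) (R : realFieldType)
  (p : 'Z_n -> O -> O -> R) : Prop :=
  forall i : 'Z_n, (forall x y, 0 <= p i x y) /\ \sum_(x : O) \sum_(y : O) p i x y = 1.

Definition nondisturbing (n : nat) (O : finType) (R : realFieldType)
  (p : 'Z_n -> O -> O -> R) : Prop :=
  forall (i : 'Z_n) (x : O), \sum_(y : O) p i y x = \sum_(y : O) p (i + 1) x y.

Definition pbar (n : nat) (O : finType) (R : realFieldType)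
  (p : 'Z_n -> O -> O -> R) (i : 'Z_n) (x y : O) : bool := 0 < p i x y.

Definition logically_noncontextual (n : nat) (O : finType) (R : realFieldType)
  (p : 'Z_n -> O -> O -> R) : Prop :=
  exists pb : {ffun 'Z_n -> O} -> bool,
    forall (i : 'Z_n) (x y : O),
      \max_(t : {ffun 'Z_n -> O} | (t i == x) && (t (i + 1)%R == y)) nat_of_bool (pb t)
      = nat_of_bool (pbar p i x y).

Definition logically_contextual (n : nat) (O : finType) (R : realFieldType)
  (p : 'Z_n -> O -> O -> R) : Prop := ~ logically_noncontextual p.

(* Main.v *)
Require Import Defs.
From HB Require Import structures.
From mathcomp Require Import all_boot all_order all_algebra.
From Stdlib Require Import Classical.
From mathcomp Require Import zify.
Import Order.TTheory GRing.Theory Num.Theory.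
Local Open Scope ring_scope.

Definition consb (n : nat) (O : finType) (R : realFieldType)
  (p : 'Z_n -> O -> O -> R) (t : {ffun 'Z_n -> O}) : bool :=
  [forall i, pbar p i (t i) (t (i + 1))].
Arguments consb {n O R} p t.

Lemma noncontextualP (n : nat) (O : finType) (R : realFieldType)
  (p : 'Z_n -> O -> O -> R) :
  logically_noncontextual p <->
  (forall i x y, pbar p i x y ->
     exists t, consb p t /\ t i = x /\ t (i + 1) = y).
Proof.
split.
- move=> [pb H] i x y Hp.
  case: (pickP (fun t : {ffun 'Z_n -> O} =>
     [&& t i == x, t (i + 1) == y & pb t])) => [t /and3P [/eqP ti /eqP ti1 pbt]|none].
  + exists t; split => //. apply/forallP => j.
    have le1 : (nat_of_bool (pb t) <= \max_(s : {ffun 'Z_n -> O} | (s j == t j) && (s (j + 1)%R == t (j + 1)%R)) nat_of_bool (pb s))%N.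
      by apply: leq_bigmax_cond; rewrite !eqxx.
    rewrite H pbt in le1. by case: (pbar _ _ _ _) le1.
  + have := H i x y. rewrite big1 ?Hp // => s /andP [si si1].
    have := none s. by rewrite si si1 /=; case: (pb s).
- move=> H. exists (consb p) => i x y.
  case Hp: (pbar p i x y).
  + have [t [ct [ti ti1]]] := H i x y Hp.
    apply/eqP; rewrite eqn_leq; apply/andP; split.
    * apply/bigmax_leqP => s _. by case: (consb p s).
    * have := @leq_bigmax_cond _ (fun s : {ffun 'Z_n -> O} => (s i == x) && (s (i + 1) == y))
         (fun s => nat_of_bool (consb p s)) t.
      rewrite ti ti1 !eqxx ct. by apply.
  + rewrite big1 // => s /andP [/eqP si /eqP si1].
    case cs: (consb p s) => //. move/forallP: cs => /(_ i). by rewrite si si1 Hp.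
Qed.

Fixpoint reach (n : nat) (O : finType) (R : realFieldType)
  (p : 'Z_n -> O -> O -> R) (mu : 'Z_n) (b : O) (nu : nat) : {set O} :=
  match nu with
  | 0 => [set b]
  | nu'.+1 => [set y | [exists x in reach n O R p mu b nu', pbar p (mu + nu'%:R + 1) x y]]
  end.
Arguments reach {n O R} p mu b nu.

Lemma reach_path (n : nat) (O : finType) (R : realFieldType)
  (p : 'Z_n -> O -> O -> R) (mu : 'Z_n) (b : O) (nu : nat) (x : O) :
  x \in reach p mu b nu ->
  exists f : nat -> O, f 0%N = b /\ f nu = x /\
    forall k, (k < nu)%N -> pbar p (mu + k%:R + 1) (f k) (f k.+1).
Proof.
elim: nu x => [|nu IH] x /=.
- rewrite inE => /eqP ->. by exists (fun _ => b).
- rewrite inE => /existsP [y /andP [yr pyx]].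
  have [f [f0 [fnu fk]]] := IH y yr.
  exists (fun k => if (k <= nu)%N then f k else x); split => //; split.
  + by rewrite ltnn.
  + move=> k; rewrite ltnS => kle; case: (ltnP k nu) => [lt|ge].
    * by rewrite (ltnW lt) ?lt; apply: fk.
    * have ek : k = nu by apply/eqP; rewrite eqn_leq kle ge.
      by rewrite ek ?leqnn ?ltnn ?fnu.
Qed.

Lemma Zarith1 (N : nat) (mu k : 'Z_N.+3) : mu + k + 1 - 1 - mu = k.
Proof. by rewrite addrK (addrC mu) addrK. Qed.

Lemma ZN0 (N : nat) : (N.+3%:R : 'Z_N.+3) = 0.
Proof. by rewrite pchar_Zp. Qed.

Lemma path_t (N : nat) (O : finType) (R : realFieldType)
  (p : 'Z_N.+3 -> O -> O -> R) (mu : 'Z_N.+3) (a b x : O) (f : nat -> O) :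
  f 0%N = b -> f N.+1 = x ->
  (forall k, (k < N.+1)%N -> pbar p (mu + k%:R + 1) (f k) (f k.+1)) ->
  pbar p mu a b -> pbar p (mu + N.+2%:R) x a ->
  exists t, consb p t /\ t mu = a /\ t (mu + 1) = b.
Proof.
move=> f0 fN fk pab pxa.
pose g k := if (k < N.+2)%N then f k else a.
pose t := [ffun j : 'Z_N.+3 => g (val (j - 1 - mu))].
have key : forall k, t (mu + k%:R + 1) = g (k %% N.+3)%N.
  by move=> k; rewrite ffunE Zarith1 -(val_Zp_nat (p:=N.+3)) .
have emu : mu = mu + N.+2%:R + 1 by rewrite -addrA natr1 ZN0 addr0.
exists t; split; [|split].
- apply/forallP => j.
  pose k := val (j - 1 - mu).
  have hj : j = mu + k%:R + 1.
    by rewrite natr_Zp (addrC mu) !subrK.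
  have hj1 : j + 1 = mu + k.+1%:R + 1 by rewrite hj -natr1 addrA.
  have tj : t j = g k by rewrite ffunE.
  rewrite hj1 key tj {1}hj.
  have kl : (k < N.+3)%N by apply: ltn_ord.

  rewrite ltnS leq_eqVlt in kl; case/orP: kl => [/eqP ek|kl].
  + rewrite ek modnn /g /= ltnn f0 -emu. exact: pab.
  + rewrite (modn_small (kl : (k.+1 < N.+3)%N)).
    rewrite ltnS leq_eqVlt in kl; case/orP: kl => [/eqP ek|kl].
    * rewrite ek /g ltnn ltnSn fN -addrA natr1. exact: pxa.
    * rewrite /g ifT ?ifT; [exact: fk| exact: kl | exact: ltnW kl].
- by rewrite {1}emu key modn_small // /g ltnn.
- have -> : mu + 1 = mu + 0%:R + 1 by rewrite mulr0n addr0.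
  by rewrite key mod0n /g /= f0.
Qed.

Lemma surj_alpha (l : nat) (O : finType) (f : 'I_l -> O) :
  #|O| = l -> injective f -> forall y, exists i, f i = y.
Proof.
move=> cO inj y.
have : y \in codom f by apply: inj_card_onto => //; rewrite (card_ord l) cO.
by case/codomP => i ->; exists i.
Qed.

Theorem theorem4 (n l : nat) (O : finType) (R : realFieldType)
  (p : 'Z_n -> O -> O -> R) :
  (3 <= n)%N -> (2 <= l)%N -> #|O| = l ->
  is_behavior p -> nondisturbing p ->
  (logically_contextual p <->
   exists (mu : 'Z_n) (a b : O) (alpha : nat -> 'I_l -> O) (m : nat -> nat),
     pbar p mu a b /\
     (forall nu : nat, (1 <= nu <= n - 2)%N -> injective (alpha nu) /\ (m nu <= l)%N) /\
     (forall i : 'I_l, (i.+1 <= m 1%N)%N -> ~~ pbar p (mu + 1) b (alpha 1%N i)) /\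
     (forall nu : nat, (1 <= nu <= n - 3)%N ->
        forall i j : 'I_l, (m nu < i.+1)%N -> (j.+1 <= m nu.+1)%N ->
          ~~ pbar p (mu + nu%:R + 1) (alpha nu i) (alpha nu.+1 j)) /\
     (forall i : 'I_l, (m (n - 2)%N < i.+1)%N ->
          ~~ pbar p (mu + (n - 1)%N%:R) (alpha (n - 2)%N i) a)).
Proof.
case: n p => [|[|[|N]]] // p _ _ cO _ _.
have e1 : (N.+3 - 1 = N.+2)%N by [].
have e2 : (N.+3 - 2 = N.+1)%N by [].
have e3 : (N.+3 - 3 = N)%N by rewrite !subSS subn0.
rewrite e1 e2 e3 /logically_contextual noncontextualP.
split.
- move=> H.
  have [mu [a [b [pab nt]]]] : exists mu a b, pbar p mu a b /\
      ~ exists t, consb p t /\ t mu = a /\ t (mu + 1) = b.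
    apply: NNPP => G; apply: H => i x y pxy; apply: NNPP => nt.
    by apply: G; exists i, x, y.
  pose r := reach p mu b.
  pose s nu := [seq x <- enum O | x \notin r nu] ++ [seq x <- enum O | x \in r nu].
  pose m nu := count (fun x => x \notin r nu) (enum O).
  pose alpha nu (i : 'I_l) := nth b (s nu) i.
  have sz nu : size (s nu) = l.
    rewrite size_cat !size_filter -cO cardT -(count_predC (fun x => x \notin r nu)).
    congr (_ + _)%N; apply: eq_count => x /=; by rewrite negbK.
  have us nu : uniq (s nu).
    rewrite cat_uniq filter_uniq ?enum_uniq //=; apply/andP; split; last by rewrite filter_uniq ?enum_uniq.
    apply/hasPn => x; rewrite !mem_filter => /andP [xr _].
    by apply/negP => /andP [xnr _]; rewrite xr in xnr.
  have szm nu : size [seq x <- enum O | x \notin r nu] = m nu by rewrite size_filter.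
  have inj nu : injective (alpha nu).
    move=> i j; rewrite /alpha => /eqP; rewrite nth_uniq ?sz // => /eqP; exact: val_inj.
  have lo nu (i : 'I_l) : (i < m nu)%N -> alpha nu i \notin r nu.
    move=> im; rewrite /alpha nth_cat szm im.
    have : nth b [seq x <- enum O | x \notin r nu] i \in [seq x <- enum O | x \notin r nu].
      by apply: mem_nth; rewrite szm.
    by rewrite mem_filter => /andP [].
  have hi nu (i : 'I_l) : (m nu <= i)%N -> alpha nu i \in r nu.
    move=> im; rewrite /alpha nth_cat szm ltnNge im /=.
    have : nth b [seq x <- enum O | x \in r nu] (i - m nu) \in [seq x <- enum O | x \in r nu].
      apply: mem_nth. have := sz nu; rewrite size_cat szm => E.
      have := ltn_ord i; rewrite -{2}E. move: im. move: (size _) (m nu) (nat_of_ord i) => k mm ii. lia.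
    by rewrite mem_filter => /andP [].
  have mle nu : (m nu <= l)%N by rewrite -cO cardT count_size.
  exists mu, a, b, alpha, m; split => //; split; [|split; [|split]].
  + by move=> nu _; split.
  + move=> i im; apply/negP => pb.
    have := lo 1%N i im; rewrite /= inE; apply/negP/negPn/existsP; exists b.
    by rewrite inE eqxx /= mulr0n addr0.
  + move=> nu _ i j im jm; apply/negP => pb.
    have := lo nu.+1 j jm; rewrite /= inE; apply/negP/negPn/existsP; exists (alpha nu i).
    by rewrite hi ?pb.
  + move=> i im; apply/negP => pb.
    have [f [f0 [fN fk]]] := @reach_path _ _ _ p mu b N.+1 _ (hi N.+1 i im).
    by apply: nt; exact: (@path_t _ _ _ p mu a b _ f f0 fN fk pab pb).
- case=> mu [a [b [alpha [m [pab [inj [c1 [c2 c3]]]]]]]] H.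
  have [t [ct [ta tb]]] := H mu a b pab.
  have cst j : pbar p j (t j) (t (j + 1)) by move/forallP: ct.
  have inv : forall nu, (1 <= nu <= N.+1)%N ->
      forall i, alpha nu i = t (mu + nu%:R + 1) -> (m nu <= i)%N.
    elim=> [|nu IH] //. case: nu IH => [|nu] IH.
    * move=> _ i ai. rewrite leqNgt; apply/negP => im. have := c1 i im.
      by rewrite ai mulr1n -tb cst.
    * move=> /andP [_ hnu] i ai.
      have [i0 ai0] := @surj_alpha _ _ _ cO (proj1 (inj nu.+1 (ltnW hnu)))
                          (t (mu + nu.+1%:R + 1)).
      have i0m := IH (ltnW hnu) i0 ai0.
      rewrite leqNgt; apply/negP => im.
      have := c2 nu.+1 hnu i0 i i0m im.
      have e : mu + nu.+2%:R + 1 = (mu + nu.+1%:R + 1) + 1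
        by rewrite -[in LHS]natr1 addrA.
      by rewrite ai0 ai e cst.
  have [i ai] := @surj_alpha _ _ _ cO (proj1 (inj N.+1 (leqnn _))) (t (mu + N.+1%:R + 1)).
  have im := inv N.+1 (leqnn _) i ai.
  have c3i := c3 i im.
  have e : mu + N.+2%:R = mu + N.+1%:R + 1 by rewrite -[in LHS]natr1 addrA.
  have e' : mu + N.+1%:R + 1 + 1 = mu by rewrite -e -addrA natr1 ZN0 addr0.
  move: c3i; rewrite e ai.
  have := cst (mu + N.+1%:R + 1). by rewrite e' ta => ->.
Qed.
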